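(* Let $0\leq\epsilon<\frac{\pi}{4}$ and let $Q_\epsilon$ be the hyperbolic quadrilateral with all four sides of equal length and consecutive interior angles $\frac{\pi}{4}-\epsilon,\ \frac{\pi}{4}+\epsilon,\ \frac{\pi}{4}-\epsilon,\ \frac{\pi}{4}+\epsilon$. Then for each pair of opposite sides of $Q_\epsilon$, the common perpendicular between them passes through the intersection point of the two diagonals of $Q_\epsilon$, and both common perpendiculars have the same length $d$, where $\cosh d=\sqrt{2}\cos\epsilon+1$.
   Context: Work in the hyperbolic plane $\mathbb{H}^2$ (curvature $-1$). Such a quadrilateral $Q_\epsilon$ exists and is unique up to isometry. *)

(* Defs.v *)
(* hyperboloid model of the hyperbolic plane H^2 (curvature -1). *)
From Stdlib Require Import Reals.
Open Scope R_scope.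

Record vec3 : Type := V3 { c0 : R; c1 : R; c2 : R }.

Definition mink (x y : vec3) : R := - c0 x * c0 y + c1 x * c1 y + c2 x * c2 y.

Definition vadd (x y : vec3) : vec3 := V3 (c0 x + c0 y) (c1 x + c1 y) (c2 x + c2 y).
Definition vscale (a : R) (x : vec3) : vec3 := V3 (a * c0 x) (a * c1 x) (a * c2 x).

Definition det3 (x y z : vec3) : R :=
  c0 x * (c1 y * c2 z - c2 y * c1 z)
  - c1 x * (c0 y * c2 z - c2 y * c0 z)
  + c2 x * (c0 y * c1 z - c1 y * c0 z).

Definition inH (x : vec3) : Prop := mink x x = -1 /\ 0 < c0 x.

Definition arcosh (t : R) : R := ln (t + sqrt (t * t - 1)).
Definition hdist (x y : vec3) : R := arcosh (- mink x y).

(* Tangent vector at P pointing towards Q (projection of Q to T_P H). *)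
Definition tang (P Q : vec3) : vec3 := vadd Q (vscale (mink Q P) P).

Definition hangle (Q P S : vec3) : R :=
  let u := tang P Q in let w := tang P S in
  acos (mink u w / (sqrt (mink u u) * sqrt (mink w w))).

(* X lies on the geodesic line through A and B (A <> B): X in span(A,B). *)
Definition on_line (X A B : vec3) : Prop := det3 A B X = 0.

Definition on_seg (X A B : vec3) : Prop :=
  exists s t : R, 0 <= s /\ 0 <= t /\ X = vadd (vscale s A) (vscale t B).

Definition perp_at (P Q R S : vec3) : Prop :=
  mink (tang P Q) (tang P R) = 0 /\ mink (tang P Q) (tang P S) = 0.

Definition common_perp (P Q A B C D : vec3) : Prop :=
  inH P /\ inH Q /\ P <> Q /\ on_line P A B /\ on_line Q C D /\
  perp_at P Q A B /\ perp_at Q P C D.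

(* ABCD (vertices in this cyclic order) is a convex quadrilateral:
   for each side, the two other vertices lie strictly on the same side of its
   line, and all sides induce the same orientation. *)
Definition convex_quad (A B C D : vec3) : Prop :=
  (0 < det3 A B C /\ 0 < det3 A B D /\ 0 < det3 B C D /\ 0 < det3 B C A /\
   0 < det3 C D A /\ 0 < det3 C D B /\ 0 < det3 D A B /\ 0 < det3 D A C) \/
  (det3 A B C < 0 /\ det3 A B D < 0 /\ det3 B C D < 0 /\ det3 B C A < 0 /\
   det3 C D A < 0 /\ det3 C D B < 0 /\ det3 D A B < 0 /\ det3 D A C < 0).

(* Main.v *)
Require Import Defs.
From Stdlib Require Import Reals Lra Psatz.
Require Import Defs.
Open Scope R_scope.

Lemma vext x y : c0 x = c0 y -> c1 x = c1 y -> c2 x = c2 y -> x = y.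
Proof. destruct x, y; simpl; intros; subst; reflexivity. Qed.

Lemma mink_sym x y : mink x y = mink y x.
Proof. unfold mink; ring. Qed.
Lemma mink_addl x y z : mink (vadd x y) z = mink x z + mink y z.
Proof. unfold mink, vadd; simpl; ring. Qed.
Lemma mink_addr x y z : mink z (vadd x y) = mink z x + mink z y.
Proof. unfold mink, vadd; simpl; ring. Qed.
Lemma mink_scalel a x z : mink (vscale a x) z = a * mink x z.
Proof. unfold mink, vscale; simpl; ring. Qed.
Lemma mink_scaler a x z : mink z (vscale a x) = a * mink z x.
Proof. unfold mink, vscale; simpl; ring. Qed.

Ltac mexp := repeat first [rewrite mink_addl | rewrite mink_addr | rewrite mink_scalel | rewrite mink_scaler].

Lemma tang_mink X Y Z : inH Y ->
  mink (tang Y X) (tang Y Z) = mink X Z + mink X Y * mink Y Z.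
Proof.
  intros [HY _]. unfold tang. mexp. rewrite HY.
  rewrite ?(mink_sym Y X), ?(mink_sym Z Y), ?(mink_sym Y Z), ?(mink_sym X Y) in *. ring.
Qed.

Lemma rev_cs x y : inH x -> inH y -> 1 <= - mink x y.
Proof.
  destruct x as [x0 x1 x2], y as [y0 y1 y2]; unfold inH, mink; simpl.
  intros [Hx Hx0] [Hy Hy0].
  assert (L : (x0*y0)^2 - (1 + x1*y1 + x2*y2)^2 =
     (x1-y1)^2 + (x2-y2)^2 + (x1*y2-x2*y1)^2).
  { replace ((x0*y0)^2) with ((x0*x0)*(y0*y0)) by ring.
    replace (x0*x0) with (1 + x1*x1 + x2*x2) by lra.
    replace (y0*y0) with (1 + y1*y1 + y2*y2) by lra. ring. }
  assert (0 <= x0*y0) by nra.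
  destruct (Rle_dec (1 + x1*y1 + x2*y2) 0) as [Hn|Hn].
  - nra.
  - assert (H2: 0 <= (x0*y0)^2 - (1 + x1*y1 + x2*y2)^2).
    { rewrite L. repeat apply Rplus_le_le_0_compat; apply pow2_ge_0. }
    assert (x0*y0 >= 1 + x1*y1 + x2*y2).
    { revert H2 H Hn. generalize (x0*y0) (1 + x1*y1 + x2*y2). intros X S H2 H Hn. nra. }
    nra.
Qed.

Lemma cosh_arcosh t : 1 <= t -> cosh (arcosh t) = t.
Proof.
  intros Ht. unfold arcosh, cosh.
  set (s := sqrt (t*t-1)).
  assert (Hs : s*s = t*t-1) by (apply sqrt_sqrt; nra).
  assert (Hs0 : 0 <= s) by apply sqrt_pos.
  assert (Hy : 0 < t + s) by lra.
  rewrite exp_Ropp, exp_ln by exact Hy.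
  assert (Hi : / (t + s) = t - s).
  { apply (Rmult_eq_reg_l (t+s)); [|lra]. rewrite Rinv_r by lra. nra. }
  rewrite Hi. lra.
Qed.
Lemma hdist_eq x y z w : inH x -> inH y -> inH z -> inH w ->
  hdist x y = hdist z w -> mink x y = mink z w.
Proof.
  intros Hx Hy Hz Hw H. unfold hdist in H.
  apply (f_equal cosh) in H. rewrite !cosh_arcosh in H by (apply rev_cs; assumption).
  lra.
Qed.

Lemma cosh_hdist x y : inH x -> inH y -> cosh (hdist x y) = - mink x y.
Proof. intros. unfold hdist. apply cosh_arcosh, rev_cs; assumption. Qed.

Lemma acos_inv x th : acos x = th -> 0 < th < PI -> cos th = x.
Proof.
  intros H Hth.
  assert (-1 < x < 1).
  { unfold acos in H. destruct (Rle_dec x (-1)); [lra|].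
    destruct (Rle_dec 1 x); lra. }
  rewrite <- H. apply cos_acos. lra.
Qed.

Lemma angle_lem X Y Z a r th : inH X -> inH Y -> inH Z ->
  mink X Y = - a -> mink Y Z = - a -> mink X Z = - r -> 1 <= a ->
  hangle X Y Z = th -> 0 < th < PI/2 ->
  0 < a*a - 1 /\ cos th * (a*a-1) = a*a - r.
Proof.
  intros HX HY HZ HXY HYZ HXZ Ha Hang Hth.
  unfold hangle in Hang. rewrite !tang_mink in Hang by assumption.
  rewrite (mink_sym Y X), (mink_sym Z Y) in Hang.
  destruct HX as [HXX _], HZ as [HZZ _].
  rewrite HXX, HZZ, HXY, HYZ, HXZ in Hang.
  replace (-1 + - a * - a) with (a*a-1) in Hang by ring.
  rewrite sqrt_sqrt in Hang by nra.
  assert (PI > 0) by apply PI_RGT_0.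
  apply acos_inv in Hang; [|lra].
  assert (0 < cos th) by (apply cos_gt_0; lra).
  destruct (Req_dec (a*a-1) 0) as [E|E].
  - rewrite E in Hang. unfold Rdiv in Hang. rewrite Rinv_0 in Hang. lra.
  - split; [nra|]. rewrite Hang. field. exact E.
Qed.

Lemma span_ortho X Y Z v w : det3 X Y Z <> 0 ->
  mink v X = mink w X -> mink v Y = mink w Y -> mink v Z = mink w Z -> v = w.
Proof.
  intros Hd H1 H2 H3.
  destruct v as [v0 v1 v2], w as [w0 w1 w2], X as [x0 x1 x2], Y as [y0 y1 y2], Z as [z0 z1 z2].
  unfold mink, det3 in *; simpl in *.
  set (e0 := -(v0 - w0)); set (e1 := v1 - w1); set (e2 := v2 - w2).
  assert (HX : e0*x0 + e1*x1 + e2*x2 = 0) by (unfold e0, e1, e2; lra).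
  assert (HY : e0*y0 + e1*y1 + e2*y2 = 0) by (unfold e0, e1, e2; lra).
  assert (HZ : e0*z0 + e1*z1 + e2*z2 = 0) by (unfold e0, e1, e2; lra).
  set (d := x0 * (y1 * z2 - y2 * z1) - x1 * (y0 * z2 - y2 * z0) + x2 * (y0 * z1 - y1 * z0)) in *.
  assert (E0 : d * e0 = (e0*x0 + e1*x1 + e2*x2) * (y1*z2 - y2*z1) + (e0*y0 + e1*y1 + e2*y2) * (z1*x2 - z2*x1) + (e0*z0 + e1*z1 + e2*z2) * (x1*y2 - x2*y1)) by (unfold d; ring).
  assert (E1 : d * e1 = (e0*x0 + e1*x1 + e2*x2) * (y2*z0 - y0*z2) + (e0*y0 + e1*y1 + e2*y2) * (z2*x0 - z0*x2) + (e0*z0 + e1*z1 + e2*z2) * (x2*y0 - x0*y2)) by (unfold d; ring).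
  assert (E2 : d * e2 = (e0*x0 + e1*x1 + e2*x2) * (y0*z1 - y1*z0) + (e0*y0 + e1*y1 + e2*y2) * (z0*x1 - z1*x0) + (e0*z0 + e1*z1 + e2*z2) * (x0*y1 - x1*y0)) by (unfold d; ring).
  rewrite HX, HY, HZ in E0, E1, E2.
  assert (e0 = 0) by (apply (Rmult_eq_reg_l d); [lra|exact Hd]).
  assert (e1 = 0) by (apply (Rmult_eq_reg_l d); [lra|exact Hd]).
  assert (e2 = 0) by (apply (Rmult_eq_reg_l d); [lra|exact Hd]).
  unfold e0, e1, e2 in *. f_equal; lra.
Qed.

Lemma cramer X Y Z V :
  vscale (det3 X Y Z) V = vadd (vadd (vscale (det3 V Y Z) X) (vscale (det3 X V Z) Y)) (vscale (det3 X Y V) Z).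
Proof.
  destruct X, Y, Z, V; unfold vscale, vadd, det3; simpl; f_equal; ring.
Qed.

Lemma lin3 X Y Z al be ga : det3 X Y Z <> 0 ->
  al * c0 X + be * c0 Y + ga * c0 Z = 0 ->
  al * c1 X + be * c1 Y + ga * c1 Z = 0 ->
  al * c2 X + be * c2 Y + ga * c2 Z = 0 -> al = 0 /\ be = 0 /\ ga = 0.
Proof.
  intros Hd H0 H1 H2.
  destruct X as [x0 x1 x2], Y as [y0 y1 y2], Z as [z0 z1 z2]; unfold det3 in *; simpl in *.
  set (d := x0 * (y1 * z2 - y2 * z1) - x1 * (y0 * z2 - y2 * z0) + x2 * (y0 * z1 - y1 * z0)) in *.
  assert (Ea : al * d = (al * x0 + be * y0 + ga * z0) * (y1 * z2 - y2 * z1) - (al * x1 + be * y1 + ga * z1) * (y0 * z2 - y2 * z0) + (al * x2 + be * y2 + ga * z2) * (y0 * z1 - y1 * z0)) by (unfold d; ring).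
  assert (Eb : be * d = x0 * ((al * x1 + be * y1 + ga * z1) * z2 - (al * x2 + be * y2 + ga * z2) * z1) - x1 * ((al * x0 + be * y0 + ga * z0) * z2 - (al * x2 + be * y2 + ga * z2) * z0) + x2 * ((al * x0 + be * y0 + ga * z0) * z1 - (al * x1 + be * y1 + ga * z1) * z0)) by (unfold d; ring).
  assert (Eg : ga * d = x0 * (y1 * (al * x2 + be * y2 + ga * z2) - y2 * (al * x1 + be * y1 + ga * z1)) - x1 * (y0 * (al * x2 + be * y2 + ga * z2) - y2 * (al * x0 + be * y0 + ga * z0)) + x2 * (y0 * (al * x1 + be * y1 + ga * z1) - y1 * (al * x0 + be * y0 + ga * z0))) by (unfold d; ring).
  rewrite H0, H1, H2 in Ea, Eb, Eg.
  repeat split; apply (Rmult_eq_reg_r d); try exact Hd; lra.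
Qed.
Ltac gsym A B C D :=
  repeat match goal with
  | H : mink A B = _ |- _ => lazymatch goal with | _ : mink B A = _ |- _ => fail | _ => pose proof H as ?; rewrite mink_sym in H end
  end.

Lemma gram_rel A B C D a p q : inH A -> inH B -> inH C -> inH D ->
  det3 A B C <> 0 ->
  mink A B = -a -> mink B C = -a -> mink C D = -a -> mink D A = -a ->
  mink A C = -p -> mink B D = -q -> p <> 1 -> q <> 1 -> 0 < 1 + p ->
  (1+p)*(1+q) = 4*a*a /\
  c0 B + c0 D = 2*a/(1+p) * (c0 A + c0 C) /\
  c1 B + c1 D = 2*a/(1+p) * (c1 A + c1 C) /\
  c2 B + c2 D = 2*a/(1+p) * (c2 A + c2 C).
Proof.
  intros [hAA HA0] [hBB HB0] [hCC HC0] [hDD HD0] Hd hAB hBC hCD hDA hAC hBD Hp Hq Hp1.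
  assert (hBA := hAB); rewrite mink_sym in hBA.
  assert (hCB := hBC); rewrite mink_sym in hCB.
  assert (hDC := hCD); rewrite mink_sym in hDC.
  assert (hAD := hDA); rewrite mink_sym in hAD.
  assert (hCA := hAC); rewrite mink_sym in hCA.
  assert (hDB := hBD); rewrite mink_sym in hDB.
  pose proof (cramer A B C D) as HC.
  set (dl := det3 A B C) in *. set (al := det3 D B C) in *.
  set (be := det3 A D C) in *. set (ga := det3 A B D) in *.
  assert (EA := f_equal (fun v => mink v A) HC).
  assert (EB := f_equal (fun v => mink v B) HC).
  assert (EC := f_equal (fun v => mink v C) HC).
  assert (ED := f_equal (fun v => mink v D) HC).
  simpl in EA, EB, EC, ED. mexp.
  repeat (rewrite mink_addl in EA, EB, EC, ED || rewrite mink_scalel in EA, EB, EC, ED).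
  rewrite ?hAA, ?hBB, ?hCC, ?hDD, ?hAB, ?hBA, ?hBC, ?hCB, ?hCD, ?hDC, ?hDA, ?hAD, ?hAC, ?hCA, ?hBD, ?hDB in EA.
  rewrite ?hAA, ?hBB, ?hCC, ?hDD, ?hAB, ?hBA, ?hBC, ?hCB, ?hCD, ?hDC, ?hDA, ?hAD, ?hAC, ?hCA, ?hBD, ?hDB in EB.
  rewrite ?hAA, ?hBB, ?hCC, ?hDD, ?hAB, ?hBA, ?hBC, ?hCB, ?hCD, ?hDC, ?hDA, ?hAD, ?hAC, ?hCA, ?hBD, ?hDB in EC.
  rewrite ?hAA, ?hBB, ?hCC, ?hDD, ?hAB, ?hBA, ?hBC, ?hCB, ?hCD, ?hDC, ?hDA, ?hAD, ?hAC, ?hCA, ?hBD, ?hDB in ED.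
  assert (Hag : al = ga).
  { assert ((p-1)*(al-ga) = 0) by nra.
    apply Rmult_integral in H. destruct H; lra. }
  assert (Hbd : be = - dl).
  { assert ((q-1)*(be+dl) = 0) by nra.
    apply Rmult_integral in H. destruct H; lra. }
  subst ga. rewrite Hbd in *.
  assert (E1 : (1+p)*al = 2*a*dl) by nra.
  assert (E2 : 2*a*al = (1+q)*dl) by nra.
  assert (Hk : al / dl = 2*a/(1+p)).
  { field_simplify_eq; [|split; lra]. lra. }
  split.
  { apply (Rmult_eq_reg_r dl); [|exact Hd]. nra. }
  rewrite <- Hk.
  assert (H0 := f_equal c0 HC). assert (H1 := f_equal c1 HC). assert (H2 := f_equal c2 HC).
  unfold vscale, vadd in H0, H1, H2; simpl in H0, H1, H2.
  repeat split; field_simplify_eq; try exact Hd. all: rewrite <- Hag in *; lra.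
Qed.
Ltac gram := repeat match goal with H : mink ?x ?y = _ |- context [mink ?x ?y] => rewrite H end.

Lemma aux_div X Y R : R <> 0 -> X*R + Y = 0 -> X + /R*Y = 0.
Proof. intros H E. replace X with (X*R/R) by (field; exact H). replace (X*R) with (-Y) by lra. field. exact H. Qed.

Lemma perp_scale P0 Q0 X ir :
  mink (vscale ir Q0) X + mink (vscale ir Q0) (vscale ir P0) * mink (vscale ir P0) X =
  ir * (mink Q0 X + (ir*ir) * (mink Q0 P0 * mink P0 X)).
Proof. rewrite !mink_scalel, !mink_scaler. ring. Qed.

Lemma core_exist A B C D a p : inH A -> inH B -> inH C -> inH D ->
  mink A B = -a -> mink B C = -a -> mink C D = -a -> mink D A = -a ->
  mink A C = -p -> mink B D = -(4*a*a/(1+p) - 1) -> 0 < a -> 1 < a*a -> 1 < p -> 1 < 4*a*a/(1+p) - 1 ->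
  exists P Q, common_perp P Q A B C D.
Proof.
  intros HA HB HC HD hAB hBC hCD hDA hAC hBD Ha Haa Hp Hq.
  set (q := 4*a*a/(1+p) - 1) in *.
  assert (hAA := proj1 HA). assert (hBB := proj1 HB). assert (hCC := proj1 HC). assert (hDD := proj1 HD).
  assert (hBA := hAB); rewrite mink_sym in hBA.
  assert (hCB := hBC); rewrite mink_sym in hCB.
  assert (hDC := hCD); rewrite mink_sym in hDC.
  assert (hAD := hDA); rewrite mink_sym in hAD.
  assert (hCA := hAC); rewrite mink_sym in hCA.
  assert (hDB := hBD); rewrite mink_sym in hDB.
  set (k := 2*a/(1+p)).
  assert (Hk : 0 < k) by (unfold k; apply Rdiv_lt_0_compat; lra).
  set (P0 := vadd (vscale (q-1) A) (vscale (k*(p-1)) B)).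
  set (Q0 := vadd (vscale (q-1) C) (vscale (k*(p-1)) D)).
  set (R2 := (q-1)^2 + (k*(p-1))^2 + 2*a*(k*(p-1))*(q-1)).
  assert (HR2 : 0 < R2).
  { unfold R2. assert (0 < q-1) by lra. assert (0 < k*(p-1)) by (apply Rmult_lt_0_compat; lra).
    assert (0 < a*(k*(p-1))*(q-1)) by (apply Rmult_lt_0_compat; [apply Rmult_lt_0_compat|]; lra). assert (0 <= (q-1)^2) by apply pow2_ge_0. assert (0 <= (k*(p-1))^2) by apply pow2_ge_0. lra. }
  assert (HPP : mink P0 P0 = - R2) by (unfold P0, R2; mexp; gram; ring).
  assert (HQQ : mink Q0 Q0 = - R2) by (unfold Q0, R2; mexp; gram; ring).
  set (ir := / sqrt R2).
  assert (Hir : ir * ir = / R2).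
  { unfold ir. rewrite <- Rinv_mult. rewrite sqrt_sqrt; lra. }
  assert (Hir0 : 0 < ir) by (unfold ir; apply Rinv_0_lt_compat, sqrt_lt_R0; lra).
  assert (HPQ : mink P0 Q0 * (a*a-1) = (p*q - a*a) * mink P0 P0).
  { unfold P0, Q0; mexp; gram. unfold q, k. field. lra. }
  assert (HP : inH (vscale ir P0)).
  { split.
    - rewrite mink_scalel, mink_scaler, HPP. rewrite <- Rmult_assoc, Hir. field. lra.
    - unfold P0, vscale, vadd; simpl. destruct HA as [_ HA0], HB as [_ HB0].
      apply Rmult_lt_0_compat; [lra|].
      assert (0 < (q-1)*c0 A) by (apply Rmult_lt_0_compat; lra).
      assert (0 < k*(p-1)*c0 B) by (apply Rmult_lt_0_compat; [apply Rmult_lt_0_compat|]; lra). lra. }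
  assert (HQ : inH (vscale ir Q0)).
  { split.
    - rewrite mink_scalel, mink_scaler, HQQ. rewrite <- Rmult_assoc, Hir. field. lra.
    - unfold Q0, vscale, vadd; simpl. destruct HC as [_ HC0], HD as [_ HD0].
      apply Rmult_lt_0_compat; [lra|].
      assert (0 < (q-1)*c0 C) by (apply Rmult_lt_0_compat; lra).
      assert (0 < k*(p-1)*c0 D) by (apply Rmult_lt_0_compat; [apply Rmult_lt_0_compat|]; lra). lra. }
  exists (vscale ir P0), (vscale ir Q0).
  unfold common_perp, perp_at, on_line.
  split; [exact HP|]. split; [exact HQ|]. split.
  { intro E. assert (E2 : mink (vscale ir P0) (vscale ir P0) = mink (vscale ir P0) (vscale ir Q0)) by (rewrite E at 2; reflexivity).
    rewrite !mink_scalel, !mink_scaler, HPP in E2.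
    assert (E3 : mink P0 Q0 = - R2).
    { apply (Rmult_eq_reg_l (ir*ir)); [lra|]. nra. }
    rewrite E3, HPP in HPQ.
    assert (0 < (p-1)*(q-1)) by (apply Rmult_lt_0_compat; lra).
    assert (p*q - a*a - (a*a-1) = (p-1)*(q-1)/2) by (unfold q; field; lra).
    nra. }
  split.
  { unfold P0, vscale, vadd, det3; simpl; ring. }
  split.
  { unfold Q0, vscale, vadd, det3; simpl; ring. }
  split; split; rewrite tang_mink by assumption; rewrite perp_scale; rewrite Hir;
    apply Rmult_eq_0_compat_l; apply aux_div; try lra; unfold P0, Q0, R2; mexp; gram; unfold q, k; field; lra.
Qed.
Lemma comb_aux pP pQ pA pB pC pD g lam e1 e2 e3 k : 1 + g <> 0 ->
  pP + g*pQ = lam*(e1*pC + e2*pD + e3*pA) ->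
  pQ + g*pP = lam*(e1*pA + e2*pB + e3*pC) ->
  pB + pD = k*(pA+pC) ->
  pP + pQ = lam*(e1+e3+e2*k)/(1+g) * (pA + pC).
Proof.
  intros Hg H1 H2 K. apply (Rmult_eq_reg_l (1+g)); [|exact Hg].
  transitivity ((pP + g*pQ) + (pQ + g*pP)); [ring|]. rewrite H1, H2.
  replace pD with (k*(pA+pC) - pB) by lra. field. exact Hg.
Qed.

Lemma pos_aux t S T : 0 < S -> 0 < T -> T = t*S -> 0 < t.
Proof. intros HS HT E. destruct (Rlt_le_dec 0 t) as [H|H]; [exact H|].
  assert (0 <= (-t)*S) by (apply Rmult_le_pos; lra). lra. Qed.

Lemma lin_aux s1 t1 s2 t2 k xA xB xC xD xX : xX = s1*xA + t1*xC -> xX = s2*xB + t2*xD ->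
  xB + xD = k*(xA+xC) -> (s1 - t2*k)*xA + (t2 - s2)*xB + (t1 - t2*k)*xC = 0.
Proof. intros H1 H2 K. replace xD with (k*(xA+xC) - xB) in H2 by lra. lra. Qed.

Lemma core_unique A B C D a p : inH A -> inH B -> inH C -> inH D ->
  det3 A B C <> 0 -> det3 C D A <> 0 ->
  mink A B = -a -> mink B C = -a -> mink C D = -a -> mink D A = -a ->
  mink A C = -p -> mink B D = -(4*a*a/(1+p) - 1) -> 0 < a -> 1 < a*a -> 1 < p -> 1 < 4*a*a/(1+p) - 1 ->
  c0 B + c0 D = 2*a/(1+p) * (c0 A + c0 C) ->
  c1 B + c1 D = 2*a/(1+p) * (c1 A + c1 C) ->
  c2 B + c2 D = 2*a/(1+p) * (c2 A + c2 C) ->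
  forall P Q X, common_perp P Q A B C D -> inH X -> on_seg X A C -> on_seg X B D ->
  on_seg X P Q /\ - mink P Q = (p * (4*a*a/(1+p) - 1) - a*a)/(a*a-1).
Proof.
  intros HA HB HC HD Hd1 Hd2 hAB hBC hCD hDA hAC hBD Ha Haa Hp Hq HK0 HK1 HK2
    P Q X [HP [HQ [HPQ [HlP [HlQ [[pA pB] [qC qD]]]]]]] HX
    [s1 [t1 [Hs1 [Ht1 EX1]]]] [s2 [t2 [Hs2 [Ht2 EX2]]]].
  set (q := 4*a*a/(1+p) - 1) in *.
  set (k := 2*a/(1+p)) in *.
  assert (hAA := proj1 HA). assert (hBB := proj1 HB). assert (hCC := proj1 HC). assert (hDD := proj1 HD).
  assert (hBA := hAB); rewrite mink_sym in hBA.
  assert (hCB := hBC); rewrite mink_sym in hCB.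
  assert (hDC := hCD); rewrite mink_sym in hDC.
  assert (hAD := hDA); rewrite mink_sym in hAD.
  assert (hCA := hAC); rewrite mink_sym in hCA.
  assert (hDB := hBD); rewrite mink_sym in hDB.
  rewrite tang_mink in pA, pB by exact HP.
  rewrite tang_mink in qC, qD by exact HQ.
  set (g := mink P Q) in *.
  assert (HgQP : mink Q P = g) by (unfold g; apply mink_sym).
  rewrite HgQP in pA, pB.
  set (x := det3 P B C / det3 A B C). set (y := det3 A P C / det3 A B C).
  assert (EP : P = vadd (vscale x A) (vscale y B)).
  { pose proof (cramer A B C P) as Hc. rewrite HlP in Hc.
    assert (H0 := f_equal c0 Hc). assert (H1 := f_equal c1 Hc). assert (H2 := f_equal c2 Hc).
    unfold vscale, vadd in H0, H1, H2 |- *; simpl in H0, H1, H2 |- *.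
    unfold x, y. apply vext; simpl; field_simplify_eq; try exact Hd1; lra. }
  set (z := det3 Q D A / det3 C D A). set (w := det3 C Q A / det3 C D A).
  assert (EQ : Q = vadd (vscale z C) (vscale w D)).
  { pose proof (cramer C D A Q) as Hc. rewrite HlQ in Hc.
    assert (H0 := f_equal c0 Hc). assert (H1 := f_equal c1 Hc). assert (H2 := f_equal c2 Hc).
    unfold vscale, vadd in H0, H1, H2 |- *; simpl in H0, H1, H2 |- *.
    unfold z, w. apply vext; simpl; field_simplify_eq; try exact Hd2; lra. }
  set (e1 := a*a - p). set (e2 := a*(p-1)). set (e3 := 1 - a*a).
  set (M1 := vadd (vadd (vscale e1 A) (vscale e2 B)) (vscale e3 C)).
  set (M2 := vadd (vadd (vscale e1 C) (vscale e2 D)) (vscale e3 A)).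
  set (mv := vadd Q (vscale g P)). set (nv := vadd P (vscale g Q)).
  assert (hM1A : mink M1 A = 0) by (unfold M1, e1, e2, e3; mexp; gram; ring).
  assert (hM1B : mink M1 B = 0) by (unfold M1, e1, e2, e3; mexp; gram; ring).
  assert (hM2C : mink M2 C = 0) by (unfold M2, e1, e2, e3; mexp; gram; ring).
  assert (hM2D : mink M2 D = 0) by (unfold M2, e1, e2, e3; mexp; gram; ring).
  assert (hM1C : mink M1 C = (p-1)*(p+1-2*a*a)) by (unfold M1, e1, e2, e3; mexp; gram; ring).
  assert (hM2A : mink M2 A = (p-1)*(p+1-2*a*a)) by (unfold M2, e1, e2, e3; mexp; gram; ring).
  assert (Hnz : (p-1)*(p+1-2*a*a) <> 0).
  { assert (p+1-2*a*a = (1+p)*(1-q)/2) by (unfold q; field; lra).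
    assert (0 < (p-1)*((1+p)*(q-1)/2)).
    { apply Rmult_lt_0_compat; [lra|]. unfold Rdiv. apply Rmult_lt_0_compat; [|lra].
      apply Rmult_lt_0_compat; lra. }
    nra. }
  set (lam := mink mv C / ((p-1)*(p+1-2*a*a))).
  set (mu := mink nv A / ((p-1)*(p+1-2*a*a))).
  assert (Emv : mv = vscale lam M1).
  { apply (span_ortho A B C); [exact Hd1| | |]; rewrite mink_scalel.
    - unfold mv. mexp. rewrite hM1A. lra.
    - unfold mv. mexp. rewrite hM1B. lra.
    - rewrite hM1C. unfold lam. field. pose proof (Rmult_neq_0_reg _ _ Hnz); tauto. }
  assert (Env : nv = vscale mu M2).
  { apply (span_ortho C D A); [exact Hd2| | |]; rewrite mink_scalel.
    - unfold nv. mexp. rewrite hM2C. lra.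
    - unfold nv. mexp. rewrite hM2D. lra.
    - rewrite hM2A. unfold mu. field. pose proof (Rmult_neq_0_reg _ _ Hnz); tauto. }
  set (k1 := mink M1 M1). set (h := mink M1 M2).
  assert (Hk1 : k1 = (a*a-1)*(p-1)*(p+1)*(q-1)/2).
  { unfold k1, M1, e1, e2, e3. mexp. gram. unfold q. field. lra. }
  assert (Hk1p : 0 < k1).
  { rewrite Hk1. unfold Rdiv. apply Rmult_lt_0_compat; [|lra].
    repeat apply Rmult_lt_0_compat; lra. }
  assert (Hh : h * (a*a-1) = - (p*q - a*a) * k1).
  { unfold h, k1, M1, M2, e1, e2, e3. mexp. gram. unfold q. field. lra. }
  assert (HM22 : mink M2 M2 = k1) by (unfold k1, M1, M2, e1, e2, e3; mexp; gram; ring).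
  assert (HM21 : mink M2 M1 = h) by (unfold h; apply mink_sym).
  assert (HPM1 : mink P M1 = 0) by (rewrite EP; unfold M1, e1, e2, e3; mexp; gram; ring).
  assert (HQM2 : mink Q M2 = 0) by (rewrite EQ; unfold M2, e1, e2, e3; mexp; gram; ring).
  assert (S1 : mu * h = g * (lam * k1)).
  { assert (U1 := f_equal (fun v => mink v M1) Env). assert (U2 := f_equal (fun v => mink v M1) Emv).
    simpl in U1, U2. unfold nv, mv in U1, U2. rewrite mink_scalel in U1, U2. mexp.
    rewrite !mink_addl, !mink_scalel in U1, U2. rewrite HPM1, HM21 in U1. rewrite HPM1 in U2.
    fold k1 in U2. rewrite <- U1, <- U2. ring. }
  assert (S2 : lam * h = g * (mu * k1)).
  { assert (U1 := f_equal (fun v => mink v M2) Env). assert (U2 := f_equal (fun v => mink v M2) Emv).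
    simpl in U1, U2. unfold nv, mv in U1, U2. rewrite mink_scalel in U1, U2.
    rewrite !mink_addl, !mink_scalel in U1, U2. rewrite HQM2, HM22 in U1. rewrite HQM2 in U2.
    fold h in U2. rewrite <- U1, <- U2. ring. }
  assert (Hg : 1 <= - g) by (apply rev_cs; assumption).
  assert (Hpq : 0 < (p-1)*(q-1)) by (apply Rmult_lt_0_compat; lra).
  assert (Hpq2 : p*q - a*a - (a*a-1) = (p-1)*(q-1)/2) by (unfold q; field; lra).
  assert (Hlam : lam <> 0).
  { intro E0. rewrite E0 in Emv.
    assert (EQP : Q = vscale (-g) P).
    { assert (H0 := f_equal c0 Emv). assert (H1 := f_equal c1 Emv). assert (H2 := f_equal c2 Emv).
      unfold mv, vadd, vscale in H0, H1, H2 |- *. simpl in H0, H1, H2.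
      apply vext; simpl; lra. }
    assert (G1 : mink Q Q = g*g*mink P P) by (rewrite EQP at 1 2; mexp; ring).
    rewrite (proj1 HQ), (proj1 HP) in G1.
    assert (g = -1) by nra.
    apply HPQ. rewrite EQP. rewrite H. destruct P; unfold vscale; simpl. f_equal; ring. }
  assert (Hmu : mu = lam).
  { assert (g * k1 * ((lam - mu) * (lam + mu)) = 0).
    { replace (g * k1 * ((lam - mu) * (lam + mu))) with (lam * (g * (lam * k1)) - mu * (g * (mu * k1))) by ring.
      rewrite <- S1, <- S2. ring. }
    apply Rmult_integral in H. destruct H as [H|H].
    { apply Rmult_integral in H. destruct H; lra. }
    apply Rmult_integral in H. destruct H as [H|H]; [lra|].
    exfalso. assert (mu = - lam) by lra. rewrite H0 in S2.
    assert (h = - g * k1) by (apply (Rmult_eq_reg_l lam); [lra|exact Hlam]).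
    assert (0 < h) by (rewrite H1; nra).
    assert (0 < (p*q - a*a) * k1) by (apply Rmult_lt_0_compat; lra).
    nra. }
  rewrite Hmu in S2.
  assert (Hgh : h = g * k1) by (apply (Rmult_eq_reg_l lam); [lra|exact Hlam]).
  assert (Hgv : - g = (p*q - a*a)/(a*a-1)).
  { apply (Rmult_eq_reg_r (k1*(a*a-1))); [|nra].
    field_simplify_eq; [|lra]. nra. }
  split; [|exact Hgv].
  assert (Hg1 : g < -1).
  { assert (1 < (p*q - a*a)/(a*a-1)).
    { apply (Rmult_lt_reg_r (a*a-1)); [lra|]. field_simplify; lra. }
    lra. }
  set (tau := lam * (e1 + e3 + e2 * k) / (1 + g)).
  rewrite Hmu in Env.
  assert (HPQs : forall f : vec3 -> R, (f = c0 \/ f = c1 \/ f = c2) ->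
    f P + f Q = tau * (f A + f C)).
  { intros f Hf.
    assert (U1 := f_equal f Env). assert (U2 := f_equal f Emv).
    assert (K : f B + f D = k * (f A + f C)) by (destruct Hf as [Ef|[Ef|Ef]]; subst f; assumption).
    unfold tau. apply (comb_aux _ _ _ (f B) _ (f D)); [lra| | |exact K].
    - destruct Hf as [Ef|[Ef|Ef]]; subst f; unfold nv, mv, M1, M2, vadd, vscale in U1, U2; simpl in U1, U2 |- *; exact U1.
    - destruct Hf as [Ef|[Ef|Ef]]; subst f; unfold nv, mv, M1, M2, vadd, vscale in U1, U2; simpl in U1, U2 |- *; exact U2. }
  assert (Htau : 0 < tau).
  { assert (E := HPQs c0 (or_introl eq_refl)).
    destruct HP as [_ HP0], HQ as [_ HQ0], HA as [_ HA0], HC as [_ HC0].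
    apply (pos_aux tau (c0 A + c0 C) (c0 P + c0 Q)); lra. }
  assert (L : s1 - t2 * k = 0 /\ t2 - s2 = 0 /\ t1 - t2 * k = 0).
  { assert (U1 := f_equal c0 EX1); assert (U2 := f_equal c0 EX2).
    assert (V1 := f_equal c1 EX1); assert (V2 := f_equal c1 EX2).
    assert (W1 := f_equal c2 EX1); assert (W2 := f_equal c2 EX2).
    unfold vadd, vscale in U1, U2, V1, V2, W1, W2; simpl in U1, U2, V1, V2, W1, W2.
    apply (lin3 A B C); [exact Hd1| | |].
    - apply (lin_aux _ _ _ _ _ _ _ _ (c0 D) (c0 X)); assumption.
    - apply (lin_aux _ _ _ _ _ _ _ _ (c1 D) (c1 X)); assumption.
    - apply (lin_aux _ _ _ _ _ _ _ _ (c2 D) (c2 X)); assumption. }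
  assert (HXs : forall f : vec3 -> R, (f = c0 \/ f = c1 \/ f = c2) -> f X = s1 * (f A + f C)).
  { intros f Hf. assert (U1 := f_equal f EX1).
    destruct Hf as [Ef|[Ef|Ef]]; subst f; unfold vadd, vscale in U1; simpl in U1; 
    rewrite U1; replace t1 with s1 by lra; ring. }
  exists (s1/tau), (s1/tau). split; [unfold Rdiv; apply Rmult_le_pos; [lra|apply Rlt_le, Rinv_0_lt_compat; lra]|]. split; [unfold Rdiv; apply Rmult_le_pos; [lra|apply Rlt_le, Rinv_0_lt_compat; lra]|].
  apply vext; unfold vadd, vscale; simpl.
  - rewrite (HXs c0) by auto. rewrite <- Rmult_plus_distr_l, (HPQs c0) by auto. field. lra.
  - rewrite (HXs c1) by auto. rewrite <- Rmult_plus_distr_l, (HPQs c1) by auto. field. lra.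
  - rewrite (HXs c2) by auto. rewrite <- Rmult_plus_distr_l, (HPQs c2) by auto. field. lra.
Qed.
Lemma on_seg_sym X A C : on_seg X A C -> on_seg X C A.
Proof.
  intros [s [t [Hs [Ht E]]]]. exists t, s. split; [exact Ht|]. split; [exact Hs|].
  rewrite E. destruct A, C; unfold vadd, vscale; simpl. f_equal; ring.
Qed.

Lemma cos_lt_1' th : 0 < th < PI/2 -> cos th < 1.
Proof.
  intros H. assert (PI > 0) by apply PI_RGT_0. rewrite <- cos_0.
  apply cos_decreasing_1; lra.
Qed.

Lemma final_val a p q u1 u2 : 0 < a*a - 1 -> u1 * (a*a-1) = a*a - q -> u2 * (a*a-1) = a*a - p ->
  (1+p)*(1+q) = 4*a*a -> (p*q - a*a)/(a*a-1) = 1 + u1 + u2.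
Proof.
  intros HK H1 H2 H3. apply (Rmult_eq_reg_r (a*a-1)); [|lra].
  field_simplify; [|lra]. nra.
Qed.

Lemma cos_sum eps : cos (PI/4 - eps) + cos (PI/4 + eps) = sqrt 2 * cos eps.
Proof.
  rewrite cos_minus, cos_plus.
  replace (cos (PI / 4) * cos eps + sin (PI / 4) * sin eps + (cos (PI / 4) * cos eps - sin (PI / 4) * sin eps))
    with (2 * cos (PI/4) * cos eps) by ring.
  rewrite cos_PI4.
  assert (Hs : sqrt 2 * sqrt 2 = 2) by (apply sqrt_sqrt; lra).
  assert (sqrt 2 <> 0) by apply sqrt2_neq_0.
  rewrite <- Hs at 1. field. exact H.
Qed.

Theorem lemma3p2 (eps : R) (A B C D : vec3) :
  0 <= eps -> eps < PI / 4 ->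
  inH A -> inH B -> inH C -> inH D ->
  convex_quad A B C D ->
  hdist A B = hdist B C -> hdist B C = hdist C D -> hdist C D = hdist D A ->
  hangle D A B = PI / 4 - eps ->
  hangle A B C = PI / 4 + eps ->
  hangle B C D = PI / 4 - eps ->
  hangle C D A = PI / 4 + eps ->
  (* common perpendicular of the opposite sides AB and CD *)
  (exists P Q : vec3, common_perp P Q A B C D) /\
  (forall P Q X : vec3, common_perp P Q A B C D ->
     inH X -> on_seg X A C -> on_seg X B D ->
     on_seg X P Q /\ cosh (hdist P Q) = sqrt 2 * cos eps + 1) /\
  (* common perpendicular of the opposite sides BC and DA *)
  (exists P Q : vec3, common_perp P Q B C D A) /\
  (forall P Q X : vec3, common_perp P Q B C D A ->
     inH X -> on_seg X A C -> on_seg X B D ->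
     on_seg X P Q /\ cosh (hdist P Q) = sqrt 2 * cos eps + 1).
Proof.
  intros He0 He1 HA HB HC HD Hcv H1 H2 H3 HaA HaB HaC HaD.
  assert (Hdets : det3 A B C <> 0 /\ det3 C D A <> 0 /\ det3 B C D <> 0 /\ det3 D A B <> 0).
  { destruct Hcv as [Hc|Hc]; repeat split; lra. }
  destruct Hdets as [d1 [d2 [d3 d4]]].
  apply hdist_eq in H1; try assumption. apply hdist_eq in H2; try assumption.
  apply hdist_eq in H3; try assumption.
  set (a := - mink A B).
  assert (hAB : mink A B = -a) by (unfold a; ring).
  assert (hBC : mink B C = -a) by (unfold a; lra).
  assert (hCD : mink C D = -a) by (unfold a; lra).
  assert (hDA : mink D A = -a) by (unfold a; lra).
  assert (Ha1 : 1 <= a) by (unfold a; apply rev_cs; assumption).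
  set (p := - mink A C). set (q := - mink B D).
  assert (hAC : mink A C = -p) by (unfold p; ring).
  assert (hBD : mink B D = -q) by (unfold q; ring).
  assert (hDB : mink D B = -q) by (rewrite mink_sym; exact hBD).
  assert (hCA : mink C A = -p) by (rewrite mink_sym; exact hAC).
  assert (PI > 0) by apply PI_RGT_0.
  assert (Hth1 : 0 < PI/4 - eps < PI/2) by lra.
  assert (Hth2 : 0 < PI/4 + eps < PI/2) by lra.
  destruct (angle_lem D A B a q _ HD HA HB hDA hAB hDB Ha1 HaA Hth1) as [HK Hu1].
  destruct (angle_lem A B C a p _ HA HB HC hAB hBC hAC Ha1 HaB Hth2) as [_ Hu2].
  pose proof (cos_lt_1' _ Hth1). pose proof (cos_lt_1' _ Hth2).
  assert (Hp : 1 < p) by nra. assert (Hq : 1 < q) by nra.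
  destruct (gram_rel A B C D a p q HA HB HC HD d1 hAB hBC hCD hDA hAC hBD ltac:(lra) ltac:(lra) ltac:(lra))
    as [Hrel [K0 [K1 K2]]].
  assert (Hqv : q = 4*a*a/(1+p) - 1) by (field_simplify_eq; lra).
  assert (Hpv : p = 4*a*a/(1+q) - 1) by (field_simplify_eq; lra).
  assert (hCB : mink C B = -a) by (rewrite mink_sym; exact hBC).
  assert (hAD : mink A D = -a) by (rewrite mink_sym; exact hDA).
  destruct (gram_rel B C D A a q p HB HC HD HA d3 hBC hCD hDA hAB hBD hCA ltac:(lra) ltac:(lra) ltac:(lra))
    as [_ [L0 [L1 L2]]].
  assert (Hval : (p*q - a*a)/(a*a-1) = sqrt 2 * cos eps + 1).
  { rewrite (final_val a p q _ _ HK Hu1 Hu2 Hrel). rewrite <- cos_sum. ring. }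
  assert (Ha0 : 0 < a) by lra. assert (Haa : 1 < a*a) by lra.
  split; [|split; [|split]].
  - apply (core_exist A B C D a p); try assumption; rewrite <- Hqv; assumption.
  - intros P Q X Hcp HX HX1 HX2.
    rewrite Hqv in hBD.
    destruct (core_unique A B C D a p HA HB HC HD d1 d2 hAB hBC hCD hDA hAC hBD Ha0 Haa Hp
      ltac:(rewrite <- Hqv; assumption) K0 K1 K2 P Q X Hcp HX HX1 HX2) as [S1 S2].
    split; [exact S1|]. rewrite cosh_hdist by (apply Hcp). rewrite S2, <- Hqv. exact Hval.
  - apply (core_exist B C D A a q); try assumption; rewrite <- Hpv; assumption.
  - intros P Q X Hcp HX HX1 HX2.
    rewrite Hpv in hCA.
    destruct (core_unique B C D A a q HB HC HD HA d3 d4 hBC hCD hDA hAB hBD hCA Ha0 Haa Hq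
      ltac:(rewrite <- Hpv; assumption) L0 L1 L2 P Q X Hcp HX HX2 (on_seg_sym _ _ _ HX1)) as [S1 S2].
    split; [exact S1|]. rewrite cosh_hdist by (apply Hcp). rewrite S2, <- Hpv.
    rewrite <- Hval. f_equal. ring.
Qed.
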